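(* Let $Q$ be a commutative Moufang loop with multiplication group $\mathfrak M$. Then the center $Z(\mathfrak M)$ of $\mathfrak M$ is exactly $\{L(a): a\in Z(Q)\}$, and the map $a\mapsto L(a)$ is an isomorphism from $Z(Q)$ onto $Z(\mathfrak M)$.
   Context: A commutative Moufang loop is a commutative loop $(Q,\cdot)$ with identity $1$ satisfying $x^2\cdot yz=xy\cdot xz$. The translation $L(x)$ is $y\mapsto xy$; $\mathfrak M$ is the permutation group of $Q$ generated by all $L(x)$. The center of $Q$ is $Z(Q)=\{x\in Q: x\cdot yz=xy\cdot z\ \forall y,z\in Q\}$. *)

(* Defs.v *)
Set Implicit Arguments.

Section CML.
Variables (Q : Type) (mul : Q -> Q -> Q) (one : Q).

(* Q is a loop with identity [one]: for all x z, x*y = z has a unique solution y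
   (and since the loop is commutative, so does y*x = z). *)
Definition is_CML : Prop :=
  (forall x, mul one x = x) /\ (forall x, mul x one = x) /\
  (forall x z, exists y, mul x y = z /\ forall y', mul x y' = z -> y' = y) /\
  (forall x y, mul x y = mul y x) /\
  (forall x y z, mul (mul x x) (mul y z) = mul (mul x y) (mul x z)).

Definition Ltr (x : Q) : Q -> Q := fun y => mul x y.

(* The multiplication group M: the permutations of Q generated by all L(x),
   i.e. the closure of the identity under left composition with L(x) and L(x)^{-1}. *)
Inductive inMult : (Q -> Q) -> Prop :=
| inMult_id : inMult (fun y => y)
| inMult_L x f : inMult f -> inMult (fun y => Ltr x (f y))
| inMult_Linv x g f :
    (forall y, Ltr x (g y) = y) -> (forall y, g (Ltr x y) = y) ->
    inMult f -> inMult (fun y => g (f y)).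

Definition centerQ (a : Q) : Prop :=
  forall y z, mul a (mul y z) = mul (mul a y) z.

Definition centerM (f : Q -> Q) : Prop :=
  inMult f /\ forall g, inMult g -> forall y, f (g y) = g (f y).
End CML.

(* Main.v *)
Require Import Defs.
From Stdlib Require Import FunctionalExtensionality.

Theorem mainTheorem6 (Q : Type) (mul : Q -> Q -> Q) (one : Q) :
  is_CML mul one ->
  (* Z(M) = { L(a) : a in Z(Q) } *)
  (forall f : Q -> Q,
      centerM mul f <-> exists a, centerQ mul a /\ forall y, f y = Ltr mul a y) /\
  (* a |-> L(a) is injective on Z(Q) *)
  (forall a b, centerQ mul a -> centerQ mul b ->
      (forall y, Ltr mul a y = Ltr mul b y) -> a = b) /\
  (* and a homomorphism Z(Q) -> Z(M) *)
  (forall a b, centerQ mul a -> centerQ mul b ->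
      forall y, Ltr mul (mul a b) y = Ltr mul a (Ltr mul b y)).
Proof.
  intros [H1l [H1r [Hdiv [Hc Hm]]]].
  assert (HL : forall x, inMult mul (fun y => Ltr mul x y)).
  { intro x. exact (inMult_L x (inMult_id mul)). }
  split; [|split].
  - intro f. split.
    + intros [Hf Hcom].
      exists (f one).
      assert (Hfy : forall y, f y = mul (f one) y).
      { intro y. pose proof (Hcom _ (HL y) one) as E. unfold Ltr in E.
        rewrite H1r in E. rewrite E. apply Hc. }
      split; [|exact Hfy].
      intros y z.
      pose proof (Hcom _ (HL z) y) as E. unfold Ltr in E.
      rewrite (Hfy (mul z y)), (Hfy y) in E.
      rewrite (Hc y z), E, (Hc z). reflexivity.
    + intros [a [Ha Hf]].
      assert (Hsw : forall x z, mul a (mul x z) = mul x (mul a z)).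
      { intros x z. rewrite (Hc x (mul a z)), <- Ha, (Hc z x). reflexivity. }
      assert (Ef : f = fun y => Ltr mul a y) by (apply functional_extensionality; exact Hf).
      subst f. split; [apply HL|].
      intros g Hg. induction Hg as [|x g Hg IH|x ginv g Hi1 Hi2 Hg IH]; intro y.
      * reflexivity.
      * unfold Ltr in *; cbv beta in *. rewrite Hsw, IH. reflexivity.
      * unfold Ltr in *; cbv beta in *. rewrite <- IH.
        set (w := g y).
        rewrite <- (Hi2 (mul a (ginv w))).
        f_equal. rewrite <- Hsw, Hi1. reflexivity.
  - intros a b _ _ E. specialize (E one). unfold Ltr in E.
    rewrite !H1r in E. exact E.
  - intros a b Ha _ y. unfold Ltr. symmetry. apply Ha.
Qed.
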